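(* The variety $IG=Mod(\{f(x_1,x_1)\approx x_1\})$ of idempotent groupoids is stable.
   Context: Type $\tau=(2)$: one binary symbol $f$; terms over $X=\{x_1,x_2,\dots\}$, $W_\tau(X_n)$ terms in $x_1,\dots,x_n$. $\Sigma\models t\approx s$: every groupoid satisfying $\Sigma$ satisfies $t\approx s$; $Id(V)$ the identities of $V$. Positions $Pos(t)\subseteq\{1,2\}^*$ (root $\varepsilon$, children $p1,p2$), $sub_t(p)$ subterm at $p$, $\preceq$ prefix order, $t(p;r)$ replacement at $p$. A position $p\in Pos(t)$, $t\in W_\tau(X_n)$, is $\Sigma$-essential if some $\mathcal A\models\Sigma$ has the term operation of $t(p;x_{n+1})$ depending on $x_{n+1}$; $PEss(t,\Sigma)$ is the set of these. $SEss(t,\Sigma)=\{r\mid\Sigma\models r\approx sub_t(p)\text{ for some }p\in PEss(t,\Sigma)\}$. $P_r^t$ is the set of $\preceq$-minimal elements of $\{p\in Pos(t)\mid\Sigma\models sub_t(p)\approx r\}$; $t^\Sigma(r\leftarrow u)=t$ if $P_r^t=\emptyset$, else $t$ with subterms at all positions of $P_r^t$ replaced by $u$. A variety $V$ is stable if, with $\Sigma=Id(V)$: $t\approx s\in\Sigma$ and $r\in SEss(t,\Sigma)\cap SEss(s,\Sigma)$ imply $t^\Sigma(r\leftarrow u)\approx s^\Sigma(r\leftarrow u)\in\Sigma$ for all terms $u$. *)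

(* Defs.v *)
From Stdlib Require Import List Arith PeanoNat Classical ClassicalEpsilon.
Import ListNotations.

(* Terms over X = {x_1, x_2, ...}; variable x_i is [Var i]; [F t s] is f(t,s). *)
Inductive term : Type :=
| Var : nat -> term
| F : term -> term -> term.

(* Positions: words over {1,2}; [false] stands for 1, [true] for 2. *)
Definition pos := list bool.

Fixpoint sub (t : term) (p : pos) : option term :=
  match p, t with
  | [], _ => Some t
  | false :: q, F a _ => sub a q
  | true :: q, F _ b => sub b q
  | _ :: _, Var _ => None
  end.

Definition in_Pos (t : term) (p : pos) : Prop := sub t p <> None.

Fixpoint repl (t : term) (p : pos) (r : term) : term :=
  match p, t with
  | [], _ => r
  | false :: q, F a b => F (repl a q r) b
  | true :: q, F a b => F a (repl b q r)
  | _ :: _, Var _ => t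
  end.

Definition prefix (p q : pos) : Prop := exists s, q = p ++ s.

Fixpoint eval {A : Type} (op : A -> A -> A) (rho : nat -> A) (t : term) : A :=
  match t with
  | Var n => rho n
  | F a b => op (eval op rho a) (eval op rho b)
  end.

Definition upd {A : Type} (rho : nat -> A) (n : nat) (a : A) : nat -> A :=
  fun m => if Nat.eqb m n then a else rho m.

Definition satisfies (A : Type) (op : A -> A -> A) (t s : term) : Prop :=
  forall rho : nat -> A, eval op rho t = eval op rho s.

Definition idset := term -> term -> Prop.
Definition gclass := forall A : Type, (A -> A -> A) -> Prop.

Definition models (Sigma : idset) (A : Type) (op : A -> A -> A) : Prop :=
  forall t s, Sigma t s -> satisfies A op t s.

Definition Mod (Sigma : idset) : gclass := fun A op => models Sigma A op.

Definition Id (V : gclass) : idset :=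
  fun t s => forall (A : Type) (op : A -> A -> A), V A op -> satisfies A op t s.

Definition consequence (Sigma : idset) (t s : term) : Prop :=
  forall (A : Type) (op : A -> A -> A), models Sigma A op -> satisfies A op t s.

(* Largest variable index in t; t lies in W_tau(X_n) with n = maxvar t,
   and x_{n+1} = Var (S (maxvar t)) is fresh. *)
Fixpoint maxvar (t : term) : nat :=
  match t with
  | Var n => n
  | F a b => Nat.max (maxvar a) (maxvar b)
  end.

Definition fresh (t : term) : nat := S (maxvar t).

Definition PEss (t : term) (Sigma : idset) (p : pos) : Prop :=
  in_Pos t p /\
  exists (A : Type) (op : A -> A -> A), models Sigma A op /\
    exists (rho : nat -> A) (a b : A),
      eval op (upd rho (fresh t) a) (repl t p (Var (fresh t))) <>
      eval op (upd rho (fresh t) b) (repl t p (Var (fresh t))).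

Definition SEss (t : term) (Sigma : idset) (r : term) : Prop :=
  exists (p : pos) (q : term),
    PEss t Sigma p /\ sub t p = Some q /\ consequence Sigma r q.

Definition Pset (Sigma : idset) (t r : term) (p : pos) : Prop :=
  (exists q, sub t p = Some q /\ consequence Sigma q r) /\
  forall p', prefix p' p ->
    (exists q', sub t p' = Some q' /\ consequence Sigma q' r) -> p' = p.

(* Simultaneous replacement by u of the subterms at all positions of an
   antichain P (top-down: a position of P is replaced as a whole). *)
Fixpoint replace_at (P : pos -> Prop) (t : term) (u : term) : term :=
  if excluded_middle_informative (P []) then u
  else match t with
       | Var n => Var n
       | F a b => F (replace_at (fun p => P (false :: p)) a u)
                    (replace_at (fun p => P (true :: p)) b u)
       end.

(* t^Sigma(r <- u); if P_r^t is empty, replace_at returns t unchanged. *)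
Definition replace_sigma (Sigma : idset) (t r u : term) : term :=
  replace_at (Pset Sigma t r) t u.

Definition stable (V : gclass) : Prop :=
  forall t s : term, Id V t s ->
  forall r : term, SEss t (Id V) r -> SEss s (Id V) r ->
  forall u : term, Id V (replace_sigma (Id V) t r u) (replace_sigma (Id V) s r u).

Definition idem_ax : idset :=
  fun t s => t = F (Var 1) (Var 1) /\ s = Var 1.

Definition IG : gclass := Mod idem_ax.

(* Main.v *)
Require Import Defs.
From Stdlib Require Import List Arith PeanoNat Classical ClassicalEpsilon.
Import ListNotations.

Definition term_eq_dec : forall x y : term, {x = y} + {x <> y}.
Proof. decide equality; apply Nat.eq_dec. Defined.

Arguments term_eq_dec : simpl never.

Definition opn (x y : term) : term := if term_eq_dec x y then x else F x y.

Fixpoint nf (t : term) : term :=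
  match t with Var n => Var n | F a b => opn (nf a) (nf b) end.

Fixpoint H (R U n : term) : term :=
  if term_eq_dec n R then U else
  match n with Var k => Var k | F a b => opn (H R U a) (H R U b) end.

Lemma H_R R U : H R U R = U.
Proof. destruct R; simpl; destruct (term_eq_dec _ _); congruence. Qed.

Lemma opn_idem x : opn x x = x.
Proof. unfold opn; destruct (term_eq_dec x x); congruence. Qed.

Lemma eval_opn_Var t : eval opn Var t = nf t.
Proof. induction t; simpl; congruence. Qed.

Lemma eval_nf A (op : A -> A -> A) (idem : forall x, op x x = x) rho t :
  eval op rho t = eval op rho (nf t).
Proof.
  induction t; simpl; auto.
  rewrite IHt1, IHt2. unfold opn. destruct (term_eq_dec (nf t1) (nf t2)) as [e|e].
  - rewrite <- e. auto.
  - reflexivity.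
Qed.

Lemma IG_idem A op : IG A op -> forall x : A, op x x = x.
Proof.
  intros HA x. specialize (HA (F (Var 1) (Var 1)) (Var 1) (conj eq_refl eq_refl) (fun _ => x)).
  exact HA.
Qed.

Lemma opn_IG : IG term opn.
Proof.
  intros t s [-> ->] rho. simpl. apply opn_idem.
Qed.

Lemma IdIG_nf t s : Id IG t s <-> nf t = nf s.
Proof.
  split.
  - intros Hts. rewrite <- !eval_opn_Var. apply Hts, opn_IG.
  - intros e A op HA rho. rewrite (eval_nf A op (IG_idem A op HA)), (eval_nf A op (IG_idem A op HA) rho s).
    congruence.
Qed.

Lemma cons_nf q r : consequence (Id IG) q r <-> nf q = nf r.
Proof.
  split.
  - intros Hc. rewrite <- !eval_opn_Var. apply Hc. intros t s Hts. apply Hts, opn_IG.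
  - intros e A op HM. apply IdIG_nf in e. apply e.
    intros t s Hts. apply HM. destruct Hts as [-> ->].
    apply IdIG_nf. simpl. apply opn_idem.
Qed.

Lemma replace_at_ext (P Q : pos -> Prop) t u :
  (forall p, P p <-> Q p) -> replace_at P t u = replace_at Q t u.
Proof.
  revert P Q; induction t; intros P Q HPQ; simpl;
  destruct (excluded_middle_informative (P [])) as [hp|hp];
  destruct (excluded_middle_informative (Q [])) as [hq|hq]; auto;
  try (exfalso; firstorder; fail).
  all: f_equal; [apply IHt1 | apply IHt2]; intros; apply HPQ.
Qed.

Section Main.
Variables r u : term.
Let S := Id IG.

Lemma Pset_root t : nf t = nf r -> Pset S t r [].
Proof.
  intros e. split.
  - exists t. split; [destruct t; reflexivity | apply cons_nf; auto].
  - intros p' [s Hs] _. symmetry in Hs. apply app_eq_nil in Hs. tauto.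
Qed.

Lemma Pset_not_root t : nf t <> nf r -> ~ Pset S t r [].
Proof.
  intros e [[q [Hq Hc]] _]. destruct t; simpl in Hq; injection Hq as <-; apply cons_nf in Hc; auto.
Qed.

Lemma Pset_cons (b : bool) t1 t2 p : nf (F t1 t2) <> nf r ->
  (Pset S (F t1 t2) r (b :: p) <-> Pset S (if b then t2 else t1) r p).
Proof.
  intros ne. split.
  - intros [[q [Hq Hc]] Hm]. split.
    + exists q. destruct b; simpl in Hq; auto.
    + intros p' [s Hs] [q' [Hq' Hc']].
      assert (b :: p' = b :: p) as E; [|injection E; auto].
      apply Hm. exists s. simpl. congruence.
      exists q'. destruct b; simpl; auto.
  - intros [[q [Hq Hc]] Hm]. split.
    + exists q. destruct b; simpl; auto.
    + intros p' [s Hs] [q' [Hq' Hc']].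
      destruct p' as [|b' p''].
      * simpl in Hq'. injection Hq' as Hq'; subst q'. apply cons_nf in Hc'. contradiction.
      * simpl in Hs. injection Hs as Eb Hs; subst b'. f_equal. apply Hm.
        exists s; auto. exists q'. destruct b; simpl in Hq'; auto.
Qed.

Lemma main t : nf (replace_at (Pset S t r) t u) = H (nf r) (nf u) (nf t).
Proof.
  induction t as [n|t1 IH1 t2 IH2].
  - destruct (term_eq_dec (nf (Var n)) (nf r)) as [e|e].
    + simpl. destruct (excluded_middle_informative (Pset S (Var n) r [])) as [h|h].
      * simpl in e. rewrite e. first [symmetry; apply H_R | destruct (term_eq_dec (nf r) (nf r)); congruence].
      * exfalso. apply h, Pset_root; auto.
    + simpl. destruct (excluded_middle_informative (Pset S (Var n) r [])) as [h|h].
      * exfalso. apply (Pset_not_root _ e h).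
      * simpl in e. destruct (term_eq_dec (Var n) (nf r)); [contradiction|reflexivity].
  - destruct (term_eq_dec (nf (F t1 t2)) (nf r)) as [e|e].
    + simpl. destruct (excluded_middle_informative (Pset S (F t1 t2) r [])) as [h|h].
      * simpl in e. rewrite e. first [symmetry; apply H_R | destruct (term_eq_dec (nf r) (nf r)); congruence].
      * exfalso. apply h, Pset_root; auto.
    + simpl. destruct (excluded_middle_informative (Pset S (F t1 t2) r [])) as [h|h].
      * exfalso. apply (Pset_not_root _ e h).
      * rewrite (replace_at_ext _ (Pset S t1 r)) by (intro; apply (Pset_cons false t1 t2 _ e)).
        rewrite (replace_at_ext (fun p => Pset S (F t1 t2) r (true :: p)) (Pset S t2 r))
          by (intro; apply (Pset_cons true t1 t2 _ e)).
        simpl. rewrite IH1, IH2. simpl in e.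
        change (opn (nf t1) (nf t2)) with (if term_eq_dec (nf t1) (nf t2) then nf t1 else F (nf t1) (nf t2)) in e |- *.
        destruct (term_eq_dec (nf t1) (nf t2)) as [E|E].
        -- rewrite <- E. apply opn_idem.
        -- simpl. destruct (term_eq_dec (F (nf t1) (nf t2)) (nf r)); [contradiction|reflexivity].
Qed.
End Main.

Theorem theorem5p1 : stable IG.
Proof.
  intros t s Hts r _ _ u. apply IdIG_nf. unfold replace_sigma.
  rewrite !main. apply IdIG_nf in Hts. congruence.
Qed.
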